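(* For each $n,k\ge1$ there exist constants $A_{n,k},C_{n,k}$ such that if $A=aH-\sum_{i=1}^nb_iE_i\in U_5$ is reduced and satisfies $a>A_{n,k}$, $3a-\sum_{i=1}^{\min\{n,9\}}b_i>C_{n,k}$ and $3a-\sum_{i=1}^nb_i\ge1$, then $A\ge kH-kE_1$. In particular $A$ is not minimal in $U_5$.
   Context: $X=\mathbb{CP}^2\#n\overline{\mathbb{CP}}^2$, $K_0=-3H+E_1+\cdots+E_n$, $\mathrm{ind}(A):=A^2-K_0\cdot A$, $U_5=\{A\in H_2(X;\mathbb{Z}):\mathrm{ind}(A)\ge2k,\ A\cdot H>0\}$ (note $kH-kE_1\in U_5$). With $H^2(X;\mathbb{R})\cong\mathbb{R}^{n+1}$ via $(x_0,\dots,x_n)\leftrightarrow x_0PD(H)-\sum x_iPD(E_i)$, the reduced cone $\mathcal{P}$ is: $0<x_1<x_0$ ($n=1$); $0<x_2\le x_1$, $x_1+x_2<x_0$ ($n=2$); $0<x_n\le\cdots\le x_1$, $x_1+x_2+x_3\le x_0$, $\sum x_i^2<x_0^2$ ($n\ge3$); $\mathcal{P}^{c_1>0}=\{[\omega]\in\mathcal{P}:\omega(3H-\sum E_i)>0\}$. For $A,B\in U_5$, $A\ge B$ means $\omega(A)\ge\omega(B)$ for all $[\omega]\in\mathcal{P}^{c_1>0}$; $A$ is minimal if no other $B\in U_5$ satisfies $A\ge B$. A class $aH-\sum b_iE_i$ is reduced if $a>0$, $b_1\ge\cdots\ge b_n\ge0$, $a\ge b_1+b_2+b_3$. *)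

(* Defs.v *)
From HB Require Import structures.
From mathcomp Require Import all_boot all_order all_algebra.
From mathcomp Require Import Rstruct.
Set Implicit Arguments. Unset Strict Implicit. Unset Printing Implicit Defensive.
Import Order.TTheory GRing.Theory Num.Theory.
Local Open Scope ring_scope.

(* H_2(X;Z) for X = CP^2 # n CP^2-bar: a class aH - sum_{i=1}^n b_i E_i is the
   pair (a, b) with b : 'I_n -> int; the ordinal j : 'I_n stands for E_{j+1}. *)
Definition hclass (n : nat) := (int * {ffun 'I_n -> int})%type.

(* 1-based coefficient b_i (i = 1..n), padded by 0 outside 1..n. *)
Definition bcoef n (A : hclass n) (i : nat) : int :=
  if i is j.+1 then oapp A.2 0 (insub j : option 'I_n) else 0.

(* intersection form: H^2 = 1, E_i^2 = -1, other products 0 *)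
Definition hdot n (A B : hclass n) : int :=
  A.1 * B.1 - \sum_(i < n) A.2 i * B.2 i.

Definition Hcl n : hclass n := (1, [ffun => 0]).
(* K_0 = -3H + E_1 + ... + E_n = -3H - sum (-1) E_i *)
Definition K0 n : hclass n := (-3, [ffun => -1]).
Definition kHkE1 n (k : nat) : hclass n :=
  (k%:Z, [ffun i : 'I_n => if val i == 0%N then k%:Z else 0]).

Definition ind n (A : hclass n) : int := hdot A A - hdot (K0 n) A.

Definition inU5 n (k : nat) (A : hclass n) : Prop :=
  2 * k%:Z <= ind A /\ 0 < hdot A (Hcl n).

Definition reduced n (A : hclass n) : Prop :=
  0 < A.1 /\ (forall i j : 'I_n, (i <= j)%N -> A.2 j <= A.2 i) /\
  (forall i : 'I_n, 0 <= A.2 i) /\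
  bcoef A 1 + bcoef A 2 + bcoef A 3 <= A.1.

(* H^2(X;R) = R^{n+1}: (x_0, x) <-> x_0 PD(H) - sum x_i PD(E_i); x j stands for x_{j+1}. *)
Definition cohom (R : realFieldType) (n : nat) := (R * {ffun 'I_n -> R})%type.

Definition xcoef (R : realFieldType) n (w : cohom R n) (i : nat) : R :=
  if i is j.+1 then oapp w.2 0 (insub j : option 'I_n) else 0.

Definition omega (R : realFieldType) n (w : cohom R n) (A : hclass n) : R :=
  w.1 * A.1%:~R - \sum_(i < n) w.2 i * (A.2 i)%:~R.

Definition inP (R : realFieldType) n (w : cohom R n) : Prop :=
  let x0 := w.1 in let x := xcoef w in
  match n with
  | 1%N => 0 < x 1%N /\ x 1%N < x0
  | 2%N => 0 < x 2%N /\ x 2%N <= x 1%N /\ x 1%N + x 2%N < x0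
  | _ => 0 < x n /\ (forall i, (1 <= i < n)%N -> x i.+1 <= x i) /\
         x 1%N + x 2%N + x 3%N <= x0 /\
         \sum_(i < n) w.2 i ^+ 2 < x0 ^+ 2
  end.

(* c_1 = PD(3H - sum E_i) *)
Definition c1cl n : hclass n := (3, [ffun => 1]).

Definition inPc1 (R : realFieldType) n (w : cohom R n) : Prop :=
  inP w /\ 0 < omega w (c1cl n).

Definition cge (R : realFieldType) n (A B : hclass n) : Prop :=
  forall w : cohom R n, inPc1 w -> omega w B <= omega w A.

Definition minimalU5 (R : realFieldType) n (k : nat) (A : hclass n) : Prop :=
  inU5 k A /\ ~ (exists B : hclass n, inU5 k B /\ B <> A /\ cge R A B).

(* Main.v *)
Require Import Defs.
From HB Require Import structures.
From mathcomp Require Import all_boot all_order all_algebra.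
From mathcomp Require Import Rstruct lra zify.
Set Implicit Arguments. Unset Strict Implicit. Unset Printing Implicit Defensive.
Import Order.TTheory GRing.Theory Num.Theory.
Local Open Scope ring_scope.

Lemma xcoefE (R : realFieldType) n (w : cohom R n) (j : 'I_n) : xcoef w j.+1 = w.2 j.
Proof. by rewrite /xcoef /= valK. Qed.

Lemma bcoefE n (A : hclass n) (j : 'I_n) : bcoef A j.+1 = A.2 j.
Proof. by rewrite /bcoef /= valK. Qed.

Lemma xcoef0 (R : realFieldType) n (w : cohom R n) p : (p == 0)%N || (n < p)%N -> xcoef w p = 0.
Proof. case: p => //= j hj; rewrite /xcoef insubF //; apply/negbTE; rewrite -leqNgt. exact: hj. Qed.

Lemma bcoef0 n (A : hclass n) p : (p == 0)%N || (n < p)%N -> bcoef A p = 0.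
Proof. case: p => //= j hj; rewrite /bcoef insubF //; apply/negbTE; rewrite -leqNgt. exact: hj. Qed.

Lemma sum_shift (R : nmodType) n (F : nat -> R) :
  \sum_(i < n) F i.+1 = \sum_(1 <= p < n.+1) F p.
Proof. by rewrite big_add1 /= big_mkord. Qed.

Lemma sum_pad (R : nmodType) M N (F : nat -> R) : (M <= N)%N ->
  (forall p, (M < p)%N -> F p = 0) ->
  \sum_(1 <= p < M.+1) F p = \sum_(1 <= p < N.+1) F p.
Proof.
move=> hMN hF; rewrite [RHS](big_cat_nat (n:=M.+1)) //=.
rewrite [X in _ = _ + X]big1_seq ?addr0 // => p /andP[_].
by rewrite mem_index_iota => /andP[h1 _]; apply: hF.
Qed.

Lemma down (R : realFieldType) (f : nat -> R) n : 0 <= f n ->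
  (forall i, (1 <= i < n)%N -> f i.+1 <= f i) ->
  forall p, (1 <= p <= n)%N -> 0 <= f p.
Proof.
move=> h0 hs p /andP[h1 hp].
have key : forall d, (d <= n - p)%N -> 0 <= f (n - d)%N.
  elim=> [|d IH] hd; first by rewrite subn0.
  apply: le_trans (IH (ltnW hd)) _.
  have -> : (n - d = (n - d.+1).+1)%N by lia.
  apply: hs; lia.
by have := key (n - p)%N (leqnn _); have -> : (n - (n - p) = p)%N by lia.
Qed.

Lemma cone_facts (R : realFieldType) n (w : cohom R n) : (1 <= n)%N -> inP w ->
  (forall p, 0 <= xcoef w p) /\
  (forall p, (1 <= p)%N -> xcoef w p.+1 <= xcoef w p) /\
  xcoef w 1%N + xcoef w 2%N + xcoef w 3%N <= w.1.
Proof.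
move=> hn H.
have gen : 0 <= xcoef w n -> (forall i, (1 <= i < n)%N -> xcoef w i.+1 <= xcoef w i) ->
  (forall p, 0 <= xcoef w p) /\ (forall p, (1 <= p)%N -> xcoef w p.+1 <= xcoef w p).
  move=> h0 hs.
  have nn : forall p, 0 <= xcoef w p.
    move=> p; have [/andP[h1 h2]|hp] := boolP (1 <= p <= n)%N; first by apply: (down h0 hs); lia.
    rewrite xcoef0 //; move: hp; case: p => [|p] //=; rewrite -ltnNge ltnS => hp; lia.
  split=> // p hp; have [hpn|hpn] := ltnP p n; first by apply: hs; lia.
  by rewrite (@xcoef0 _ _ _ p.+1) //; lia.
move: H; case: n w hn gen => [|[|[|n]]] w // _ gen.
- move=> [h1 h2]; have [nn st] := gen (ltW h1) (fun i hi => ltac:(lia)).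
  split=> //; split=> //.
  rewrite (@xcoef0 _ _ _ 2%N) ?(@xcoef0 _ _ _ 3%N) // !addr0; exact: ltW.
- move=> [h1 [h2 h3]]; have [nn st] : (forall p, 0 <= xcoef w p) /\ (forall p, (1 <= p)%N -> xcoef w p.+1 <= xcoef w p).
    apply: gen; first exact: ltW.
    by move=> i hi; have -> : i = 1%N by lia.
  split=> //; split=> //.
  rewrite (@xcoef0 _ _ _ 3%N) // addr0; exact: ltW.
- move=> [h1 [h2 [h3 _]]]; have [nn st] := gen (ltW h1) h2.
  by split.
Qed.
Lemma key (R : realFieldType) (x0 x1 x2 x3 x4 x5 x6 x7 x8 x9 a b1 b2 b3 b4 b5 b6 b7 b8 b9 k : R) :
  0 <= x9 -> x9 <= x8 -> x8 <= x7 -> x7 <= x6 -> x6 <= x5 -> x5 <= x4 -> x4 <= x3 ->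
  x3 <= x2 -> x2 <= x1 -> x1 + x2 + x3 <= x0 ->
  0 <= b9 -> b9 <= b8 -> b8 <= b7 -> b7 <= b6 -> b6 <= b5 -> b5 <= b4 -> b4 <= b3 ->
  b3 <= b2 -> b2 <= b1 -> b1 + b2 + b3 <= a ->
  12 * k < 3 * a - (b1 + b2 + b3 + b4 + b5 + b6 + b7 + b8 + b9) ->
  k * (x0 - x1) <= a * x0 - (x1 * b1 + x2 * b2 + x3 * b3 + x4 * b4 + x5 * b5 + x6 * b6
     + x7 * b7 + x8 * b8 + x9 * b9)
     - b9 * (3 * x0 - (x1 + x2 + x3 + x4 + x5 + x6 + x7 + x8 + x9)).
Proof.
move=> *.
have hP : 0 <= (a - b1 - b2 - b3) * x1 by apply: mulr_ge0; lra.
have h2 : 0 <= (b2 - b3) * (x0 - x2) by apply: mulr_ge0; lra.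
have h3 : 0 <= (b3 - b4) * (2 * x0 - x2 - x3) by apply: mulr_ge0; lra.
have h4 : 0 <= (b4 - b5) * (3 * x0 - (x1 + x2 + x3 + x4) - (x0 - x1) / 2) by apply: mulr_ge0; lra.
have h5 : 0 <= (b5 - b6) * (3 * x0 - (x1 + x2 + x3 + x4 + x5) - (x0 - x1) / 2) by apply: mulr_ge0; lra.
have h6 : 0 <= (b6 - b7) * (3 * x0 - (x1 + x2 + x3 + x4 + x5 + x6) - (x0 - x1) / 2) by apply: mulr_ge0; lra.
have h7 : 0 <= (b7 - b8) * (3 * x0 - (x1 + x2 + x3 + x4 + x5 + x6 + x7) - (x0 - x1) / 2) by apply: mulr_ge0; lra.
have h8 : 0 <= (b8 - b9) * (3 * x0 - (x1 + x2 + x3 + x4 + x5 + x6 + x7 + x8) - (x0 - x1) / 2) by apply: mulr_ge0; lra.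
have hm : 0 <= (a - b1 - b2 - b3 + b1 - b4 + (b4 - b9) / 2 - k) * (x0 - x1) by apply: mulr_ge0; lra.
lra.
Qed.
Lemma sum9 (R : nmodType) (F : nat -> R) :
  \sum_(1 <= p < 10) F p = F 1%N + F 2%N + F 3%N + F 4%N + F 5%N + F 6%N + F 7%N + F 8%N + F 9%N.
Proof. by do 9 rewrite big_ltn //; rewrite big_geq // addr0 !addrA. Qed.

Lemma sum_first (R : nmodType) n (F : nat -> R) : (1 <= n)%N ->
  (forall j, j != 0%N -> F j = 0) -> \sum_(i < n) F i = F 0%N.
Proof.
move=> hn hF; rewrite -(big_mkord xpredT F) big_ltn // big1_seq ?addr0 // => p /andP[_].
by rewrite mem_index_iota => /andP[h1 _]; apply: hF; rewrite -lt0n.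
Qed.

Lemma class_facts n (A : hclass n) : reduced A ->
  (forall p, 0 <= bcoef A p) /\
  (forall p q, (1 <= p <= q)%N -> bcoef A q <= bcoef A p) /\
  bcoef A 1%N + bcoef A 2%N + bcoef A 3%N <= A.1.
Proof.
move=> [_ [hm [hnn h3]]].
have E : forall j (hj : (j < n)%N), bcoef A j.+1 = A.2 (Ordinal hj).
  by move=> j hj; rewrite -bcoefE.
have nn : forall p, 0 <= bcoef A p.
  case=> [|j]; first by rewrite bcoef0.
  have [hj|hj] := ltnP j n; first by rewrite E.
  by rewrite bcoef0 //; apply/orP; right.
split=> //; split=> // p q /andP[hp hq].
have [hqn|hqn] := leqP q n; last by rewrite bcoef0 ?nn //; apply/orP; right.
case: p hp hq => [|p] // _ hpq; case: q hqn hpq => [|q] // hqn hpq.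
by rewrite (E p (leq_trans hpq hqn)) (E q hqn); apply: hm.
Qed.

Theorem lemma4p5 (n k : nat) (hn : (1 <= n)%N) (hk : (1 <= k)%N) :
  exists Ank Cnk : int, forall A : hclass n,
    inU5 k A -> reduced A -> Ank < A.1 ->
    Cnk < 3 * A.1 - \sum_(1 <= i < (minn n 9).+1) bcoef A i ->
    1 <= 3 * A.1 - \sum_(1 <= i < n.+1) bcoef A i ->
    cge Rdefinitions.R A (kHkE1 n k) /\ ~ minimalU5 Rdefinitions.R k A.
Proof.
exists k%:Z, (12 * k%:Z).
move=> A hU hred hA hC _.
have [bnn [bmon b3]] := class_facts hred.
have hs : \sum_(1 <= i < (minn n 9).+1) bcoef A i = \sum_(1 <= i < 10) bcoef A i.
  have [h9|h9] := leqP n 9.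
    apply: sum_pad => // p hp; rewrite bcoef0 //; apply/orP; right; exact hp.
  by [].
rewrite hs sum9 in hC.
have cgeP : cge Rdefinitions.R A (kHkE1 n k).
  move=> w [hP hc1].
  set R := Rdefinitions.R in w hP hc1 *.
  have [xnn [xmon x3]] := cone_facts hn hP.
  set N := maxn n 9.
  have hnN : (n <= N)%N by rewrite leq_maxl.
  have h9N : (9 <= N)%N by rewrite leq_maxr.
  have padx : forall p, (n < p)%N -> xcoef w p = 0.
    by move=> p hp; rewrite xcoef0 //; apply/orP; right.
  have padb : forall p, (n < p)%N -> bcoef A p = 0.
    by move=> p hp; rewrite bcoef0 //; apply/orP; right.
  have oA : omega w A = w.1 * A.1%:~R -
     ((\sum_(1 <= p < 10) xcoef w p * (bcoef A p)%:~R) +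
      \sum_(10 <= p < N.+1) xcoef w p * (bcoef A p)%:~R).
    rewrite /omega; congr (_ - _).
    rewrite -(big_cat_nat (n:=10)) //.
    rewrite -(@sum_pad _ n N) //; last by move=> p hp; rewrite padx ?mul0r.
    rewrite -sum_shift; apply: eq_bigr => i _; by rewrite xcoefE bcoefE.
  have oc : omega w (c1cl n) = w.1 * 3 -
     ((\sum_(1 <= p < 10) xcoef w p) + \sum_(10 <= p < N.+1) xcoef w p).
    rewrite /omega; congr (_ - _).
    rewrite -(big_cat_nat (n:=10)) //.
    rewrite -(@sum_pad _ n N) //.
    rewrite -sum_shift; apply: eq_bigr => i _; by rewrite xcoefE ffunE mulr1.
  have ok : omega w (kHkE1 n k) = (k%:Z)%:~R * (w.1 - xcoef w 1%N).
    rewrite /omega /=.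
    have -> : \sum_(i < n) w.2 i * ([ffun i : 'I_n => if val i == 0%N then k%:Z else 0] i)%:~R
        = xcoef w 1%N * (k%:Z)%:~R.
      transitivity (\sum_(i < n) (fun j : nat => xcoef w j.+1 * (if j == 0%N then k%:Z else 0)%:~R) i).
        by apply: eq_bigr => i _; rewrite ffunE xcoefE.
      apply: (@sum_first _ n (fun j : nat => xcoef w j.+1 * (if j == 0%N then k%:Z else 0)%:~R)) => // j.
      by move/negbTE => ->; rewrite mulr0.
    by rewrite mulrBr mulrC [X in _ - X]mulrC.
  rewrite ok oA.
  move: hc1; rewrite oc !sum9 => hc1.
  set T := \sum_(10 <= p < N.+1) xcoef w p * (bcoef A p)%:~R.
  set Tx := \sum_(10 <= p < N.+1) xcoef w p.
  have hT : T <= (bcoef A 9%N)%:~R * Tx.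
    rewrite /T /Tx mulr_sumr; apply: ler_sum_nat => p /andP[hp _].
    rewrite [X in _ <= X]mulrC; apply: ler_wpM2l; first exact: xnn.
    rewrite ler_int; apply: bmon; lia.
  have hb9 : (bcoef A 9%N)%:~R * Tx <= (bcoef A 9%N)%:~R *
     (w.1 * 3 - (xcoef w 1%N + xcoef w 2%N + xcoef w 3%N + xcoef w 4%N + xcoef w 5%N + xcoef w 6%N + xcoef w 7%N + xcoef w 8%N + xcoef w 9%N)).
    apply: ler_wpM2l; first by rewrite ler0z.
    rewrite /Tx; lra.
  have hCR : 12 * (k%:Z)%:~R < 3 * (A.1)%:~R - ((bcoef A 1%N)%:~R + (bcoef A 2%N)%:~R + (bcoef A 3%N)%:~R
      + (bcoef A 4%N)%:~R + (bcoef A 5%N)%:~R + (bcoef A 6%N)%:~R + (bcoef A 7%N)%:~R + (bcoef A 8%N)%:~R + (bcoef A 9%N)%:~R) :> R.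
    by move: hC; rewrite -(ltr_int R) !(intrD, intrM, intrN, intrB).
  have bm : forall p, (1 <= p)%N -> (bcoef A p.+1)%:~R <= (bcoef A p)%:~R :> R.
    by move=> p hp; rewrite ler_int; apply: bmon; lia.
  have b3R : (bcoef A 1%N)%:~R + (bcoef A 2%N)%:~R + (bcoef A 3%N)%:~R <= (A.1)%:~R :> R.
    by rewrite -!intrD ler_int.
  have b9R : 0 <= (bcoef A 9%N)%:~R :> R by rewrite ler0z.
  have := key (xnn 9%N) (xmon 8%N erefl) (xmon 7%N erefl) (xmon 6%N erefl) (xmon 5%N erefl)
    (xmon 4%N erefl) (xmon 3%N erefl) (xmon 2%N erefl) (xmon 1%N erefl) x3
    (b9R) (bm 8%N erefl) (bm 7%N erefl) (bm 6%N erefl) (bm 5%N erefl)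
    (bm 4%N erefl) (bm 3%N erefl) (bm 2%N erefl) (bm 1%N erefl) b3R hCR.
  lra.
split=> //.
move=> [_ hmin]; apply: hmin; exists (kHkE1 n k); split; last split=> //.
- have sB : forall G : int -> int, G 0 = 0 ->
      \sum_(i < n) G ((kHkE1 n k).2 i) = G k%:Z.
    move=> G hG.
    transitivity (\sum_(i < n) (fun j : nat => G (if j == 0%N then k%:Z else 0)) i).
      by apply: eq_bigr => i _; rewrite ffunE.
    apply: (@sum_first _ n (fun j : nat => G (if j == 0%N then k%:Z else 0))) => // j.
    by move/negbTE => ->.
  have e1 := sB (fun z => z * z) erefl.
  have e2 := sB (fun z => -1 * z) erefl.
  have e3 := sB (fun z => z * 0) erefl.
  rewrite /inU5 /ind /hdot.
  have f1 : \sum_(i < n) (kHkE1 n k).2 i * (kHkE1 n k).2 i = k%:Z * k%:Z by exact: e1.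
  have f2 : \sum_(i < n) (K0 n).2 i * (kHkE1 n k).2 i = -1 * k%:Z.
    rewrite -e2; apply: eq_bigr => i _; by rewrite /K0 /= !ffunE.
  have f3 : \sum_(i < n) (kHkE1 n k).2 i * (Hcl n).2 i = k%:Z * 0.
    rewrite -e3; apply: eq_bigr => i _; by rewrite /Hcl /= !ffunE.
  rewrite f1 f2 f3 /=; split; lia.
- by move=> eA; move: hA; rewrite -eA /= ltxx.
Qed.
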